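(* Let $L\ge 2$ be an integer and let $a_0,\dots,a_{L-2},b_0,\dots,b_{L-1}$ and $\tilde a_0,\dots,\tilde a_{L-2},\tilde b_0,\dots,\tilde b_{L-1}$ be real numbers. Let $\mathcal{B}\in\mathcal{L}^{2}$ and $\tilde{\mathcal{B}}\in\mathcal{L}^{2,c}$ (with lag $l<L$) be single-input single-output behaviors with signals $w=(u,y)$, and suppose their length-$L$ restricted behaviors, written in the coordinate ordering $w=\mathrm{col}(y_0,u_0,y_1,u_1,\dots,y_{L-2},u_{L-2},u_{L-1},y_{L-1})\in\mathbb{R}^{2L}$, are $$\mathcal{B}|_L=\Big\{w:\ y_{L-1}=\sum_{k=0}^{L-2}a_k y_k+\sum_{k=0}^{L-1}b_k u_k\Big\},\qquad \tilde{\mathcal{B}}|_L=\Big\{w:\ y_{L-1}=\sum_{k=0}^{L-2}\tilde a_k y_k+\sum_{k=0}^{L-1}\tilde b_k u_k\Big\}.$$ Define the row vectors $F=[a_0\ b_0\ a_1\ b_1\ \cdots\ a_{L-2}\ b_{L-2}\ b_{L-1}]$ and $\tilde F=[\tilde a_0\ \tilde b_0\ \cdots\ \tilde a_{L-2}\ \tilde b_{L-2}\ \tilde b_{L-1}]$ in $\mathbb{R}^{1\times(2L-1)}$. If $\|F-\tilde F\|_2\le\epsilon$, then $\mathrm{gap}_L(\mathcal{B},\tilde{\mathcal{B}})\le\epsilon$.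
   Context: $\mathcal{L}^{q}$: class of complete (closed under pointwise convergence) linear time-invariant behaviors $\mathcal{B}\subseteq(\mathbb{R}^q)^{\mathbb{Z}_{\ge0}}$; $\mathcal{L}^{q,c}$ the subclass with complexity $c=(m,l,n)$ (number of inputs, lag, order). The restricted behavior $\mathcal{B}|_L\subseteq\mathbb{R}^{qL}$ is the set of length-$L$ windows of trajectories of $\mathcal{B}$ (here with coordinates ordered as in the claim, the same ordering used for both behaviors). For subspaces $\mathcal{V},\mathcal{W}\subseteq\mathbb{R}^N$ with orthogonal projectors $P_{\mathcal{V}},P_{\mathcal{W}}$, $\mathrm{gap}(\mathcal{V},\mathcal{W})=\|P_{\mathcal{V}}-P_{\mathcal{W}}\|_2$ (spectral norm), and $\mathrm{gap}_L(\mathcal{B},\tilde{\mathcal{B}})=\mathrm{gap}(\mathcal{B}|_L,\tilde{\mathcal{B}}|_L)$. For a row vector, $\|\cdot\|_2$ is the Euclidean norm. *)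

(* Defs.v *)
From HB Require Import structures.
From mathcomp Require Import all_boot all_order all_algebra.
From mathcomp Require Import boolp classical_sets reals topology normedtype sequences.
Set Implicit Arguments. Unset Strict Implicit. Unset Printing Implicit Defensive.
Import Order.TTheory GRing.Theory Num.Theory numFieldNormedType.Exports.
Local Open Scope ring_scope.
Local Open Scope classical_set_scope.

Section Defs.
Variable R : realType.

(* A trajectory of a 2-variable (SISO) system on Z_{>=0}: w t = (u t, y t). *)
Definition traj := nat -> R * R.

Definition is_linear_beh (B : set traj) : Prop :=
  B (fun _ => (0, 0)) /\
  forall (c : R) (w v : traj), B w -> B v ->
    B (fun t => (c * (w t).1 + (v t).1, c * (w t).2 + (v t).2)).

Definition is_shift_inv (B : set traj) : Prop :=
  forall w : traj, B w -> B (fun t => w t.+1).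

Definition is_complete_beh (B : set traj) : Prop :=
  forall (ws : nat -> traj) (w : traj), (forall n, B (ws n)) ->
    (forall t, (fun n => (ws n t).1) @ \oo --> (w t).1 /\
               (fun n => (ws n t).2) @ \oo --> (w t).2) ->
    B w.

Definition in_L2 (B : set traj) : Prop :=
  [/\ is_linear_beh B, is_shift_inv B & is_complete_beh B].

Definition l_complete (l : nat) (B : set traj) : Prop :=
  forall w : traj, B w <->
    (forall t, exists2 w', B w' & forall k, (k <= l)%N -> w' k = w (t + k)%N).

(* The lag of B is < L (lag = least l with B l-complete). *)
Definition lag_lt (B : set traj) (L : nat) : Prop :=
  exists l, (l < L)%N /\ l_complete l B.

(* Coordinate of the length-L window of w in the ordering
   col(y_0,u_0,y_1,u_1,...,y_{L-2},u_{L-2},u_{L-1},y_{L-1}). *)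
Definition wcoord (L : nat) (w : traj) (i : nat) : R :=
  if (i < 2 * L - 2)%N then (if odd i then (w i./2).1 else (w i./2).2)
  else if i == (2 * L - 2)%N then (w L.-1).1 else (w L.-1).2.

Definition window (L : nat) (w : traj) : 'rV[R]_(2 * L) :=
  \row_(i < 2 * L) wcoord L w i.

Definition restr (L : nat) (B : set traj) : set 'rV[R]_(2 * L) :=
  [set v | exists w t, B w /\ v = window L (fun k => w (t + k)%N)].

(* nat-indexed access to a row vector (0 outside the range) *)
Definition vat (N : nat) (v : 'rV[R]_N) (j : nat) : R :=
  match insub j with Some i => v 0 i | None => 0 end.

Definition uidx (L k : nat) : nat := if (k < L.-1)%N then (2 * k).+1 else (2 * L - 2)%N.

Definition arx_set (L : nat) (a b : nat -> R) : set 'rV[R]_(2 * L) :=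
  [set v | vat v (2 * L - 1) =
           \sum_(k < L.-1) a k * vat v (2 * k) + \sum_(k < L) b k * vat v (uidx L k)].

Definition Fvec (L : nat) (a b : nat -> R) : 'rV[R]_(2 * L - 1) :=
  \row_(j < 2 * L - 1)
    (if (j < 2 * L - 2)%N then (if odd j then b j./2 else a j./2) else b L.-1).

Definition norm2 (N : nat) (v : 'rV[R]_N) : R := Num.sqrt (\sum_i v 0 i ^+ 2).

Definition specnorm (N : nat) (M : 'M[R]_N) : R :=
  sup [set r | exists x : 'rV[R]_N, norm2 x <= 1 /\ r = norm2 (x *m M)].

Definition is_orth_proj (N : nat) (V : set 'rV[R]_N) (P : 'M[R]_N) : Prop :=
  forall x : 'rV[R]_N, V (x *m P) /\
    forall v, V v -> (x - x *m P) *m v^T = 0.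

Definition orth_proj (N : nat) (V : set 'rV[R]_N) : 'M[R]_N :=
  xget 0 [set P | is_orth_proj V P].

Definition gap (N : nat) (V W : set 'rV[R]_N) : R :=
  specnorm (orth_proj V - orth_proj W).

Definition gapL (L : nat) (B Bt : set traj) : R := gap (@restr L B) (@restr L Bt).

End Defs.
Arguments window {R} L w.
Arguments restr {R} L B.
Arguments arx_set {R} L a b.
Arguments Fvec {R} L a b.
Arguments wcoord {R} L w i.
Arguments lag_lt {R} B L.
Arguments l_complete {R} l B.
Arguments gapL {R} L B Bt.

(* Main.v *)
Require Import Defs.
Set Warnings "-all".
From HB Require Import structures.
From mathcomp Require Import all_boot all_order all_algebra.
From mathcomp Require Import boolp classical_sets reals topology normedtype sequences.
From mathcomp Require Import ring lra zify.
Require Import Defs.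
Import Order.TTheory GRing.Theory Num.Theory.
Local Open Scope ring_scope.
Set Implicit Arguments. Unset Strict Implicit.

Section G.
Variable R : realType.
Variable N : nat.
Implicit Types x y z n : 'rV[R]_N.

Definition dot x y : R := \sum_i x 0 i * y 0 i.

Lemma mulmxT_dot x y : x *m y^T = (dot x y)%:M.
Proof.
apply/matrixP => i j; rewrite !ord1 !mxE /= mulr1n.
by apply: eq_bigr => k _; rewrite !mxE.
Qed.

Lemma dotC x y : dot x y = dot y x.
Proof. by apply: eq_bigr => i _; rewrite mulrC. Qed.
Lemma dotDl x y z : dot (x + y) z = dot x z + dot y z.
Proof. by rewrite /dot -big_split; apply: eq_bigr => i _; rewrite !mxE mulrDl. Qed.
Lemma dotBl x y z : dot (x - y) z = dot x z - dot y z.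
Proof. by rewrite /dot -sumrB; apply: eq_bigr => i _; rewrite !mxE mulrBl. Qed.
Lemma dotZl (c : R) x z : dot (c *: x) z = c * dot x z.
Proof. by rewrite /dot mulr_sumr; apply: eq_bigr => i _; rewrite !mxE mulrA. Qed.
Lemma dotDr x y z : dot z (x + y) = dot z x + dot z y.
Proof. by rewrite dotC dotDl !(dotC z). Qed.
Lemma dotBr x y z : dot z (x - y) = dot z x - dot z y.
Proof. by rewrite dotC dotBl !(dotC z). Qed.
Lemma dotZr (c : R) x z : dot z (c *: x) = c * dot z x.
Proof. by rewrite dotC dotZl dotC. Qed.
Lemma dot_ge0 x : 0 <= dot x x.
Proof. by apply: sumr_ge0 => i _; rewrite -expr2 sqr_ge0. Qed.
Lemma dot_eq0 x : dot x x = 0 -> x = 0.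
Proof.
move=> h; apply/matrixP => i j; rewrite ord1 mxE.
have hj : x 0 j * x 0 j = 0.
  by apply: (@psumr_eq0P _ _ predT (fun k => x 0 k * x 0 k)) => // k _; rewrite -expr2 sqr_ge0.
by move/eqP: hj; rewrite mulf_eq0 orbb => /eqP.
Qed.

Lemma CS x y : dot x y ^+ 2 <= dot x x * dot y y.
Proof.
have [y0|yn0] := eqVneq (dot y y) 0.
  have d0 : forall z, dot z 0 = 0 by move=> z; rewrite /dot big1 // => i _; rewrite mxE mulr0.
  by move: y0 => /dot_eq0 ->; rewrite !d0 expr0n /= mulr0.
have yp : 0 < dot y y by rewrite lt_def yn0 dot_ge0.
set t := dot x y / dot y y.
have := dot_ge0 (x - t *: y).
rewrite !(dotBl, dotBr, dotZl, dotZr) (dotC y x) /t => h.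
have e : (dot x x - dot x y / dot y y * dot x y -
 dot x y / dot y y * (dot x y - dot x y / dot y y * dot y y)) * dot y y
   = dot x x * dot y y - dot x y ^+ 2.
  by field.
rewrite -subr_ge0 -e; apply: mulr_ge0 => //; exact: ltW.
Qed.

Definition proj n : 'M[R]_N := 1%:M - (dot n n)^-1 *: (n^T *m n).

Lemma projE x n : x *m proj n = x - (dot x n / dot n n) *: n.
Proof.
rewrite /proj mulmxBr mulmx1 -scalemxAr mulmxA mulmxT_dot mul_scalar_mx scalerA.
by rewrite mulrC.
Qed.

Definition hyp n : set 'rV[R]_N := [set v | dot v n = 0].

Lemma mx11_eq0 (A : 'M[R]_1) : A = 0 <-> A 0 0 = 0.
Proof.
split; first by move=> ->; rewrite mxE.
by move=> h; apply/matrixP => i j; rewrite !ord1 h mxE.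
Qed.

Notation is_op := (@is_orth_proj R N).

Lemma proj_is_op n : dot n n != 0 -> is_op (hyp n) (proj n).
Proof.
move=> nn x; split.
  by rewrite /hyp /= projE dotBl dotZl mulfVK // subrr.
move=> v; rewrite /hyp /= => hv.
rewrite projE opprB addrC subrK mulmxT_dot dotZl (dotC n) hv mulr0.
by apply/mx11_eq0; rewrite mxE.
Qed.

Lemma op_unique n P : is_op (hyp n) P -> forall Q, is_op (hyp n) Q -> Q = P.
Proof.
move=> hP Q hQ; apply/row_matrixP => i; rewrite !rowE.
set x := 'e_i.
have [VP oP] := hP x; have [VQ oQ] := hQ x.
set z := x *m Q - x *m P.
have Vz : hyp n z by rewrite /hyp /= /z dotBl VP VQ subrr.
have e1 := oP _ Vz; have e2 := oQ _ Vz.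
rewrite !mulmxT_dot in e1 e2.
have d1 : dot (x - x *m P) z = 0 by move/matrixP: e1 => /(_ 0 0); rewrite !mxE /= mulr1n.
have d2 : dot (x - x *m Q) z = 0 by move/matrixP: e2 => /(_ 0 0); rewrite !mxE /= mulr1n.
have zz : dot z z = 0.
  have -> : dot z z = dot ((x - x *m P) - (x - x *m Q)) z.
    by congr dot; apply/matrixP => a b; rewrite /z !mxE; ring.
  by rewrite dotBl d1 d2 subrr.
by apply/eqP; rewrite -subr_eq0; apply/eqP; apply: dot_eq0.
Qed.


Lemma orth_projE n : dot n n != 0 -> orth_proj (hyp n) = proj n.
Proof.
move=> nn; apply: xget_unique; first exact: proj_is_op.
move=> Q hQ; exact: (op_unique (proj_is_op nn)).
Qed.

Lemma norm2_dot x : norm2 x = Num.sqrt (dot x x).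
Proof. by rewrite /norm2; congr Num.sqrt; apply: eq_bigr => i _; rewrite expr2. Qed.

Lemma scal (s t g X a b e : R) : 0 < s -> 0 < t -> 0 <= X <= 1 -> 0 <= e ->
  0 <= s * t - g ^+ 2 ->
  (s * (s * b - a * g)) ^+ 2 <= (s * (s * X - a ^+ 2)) * (s * (s * t - g ^+ 2)) ->
  s * t - g ^+ 2 <= e ^+ 2 * (s * t) ->
  (b / t) ^+ 2 * t - 2 * (b / t) * (a / s) * g + (a / s) ^+ 2 * s <= e ^+ 2.
Proof.
move=> sp tp /andP[X0 X1] e0 G0 CS H.
have c1 : (s * b - a * g) ^+ 2 <= (s * X - a ^+ 2) * (s * t - g ^+ 2).
  have s2 : 0 < s ^+ 2 by rewrite exprn_gt0.
  rewrite -(ler_pM2l s2); move: CS; congr (_ <= _); ring.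
have c2 : s * (s * b ^+ 2 - 2 * a * b * g + a ^+ 2 * t) <= s * (X * (s * t - g ^+ 2)).
  move: c1; rewrite -subr_ge0 => c1; rewrite -subr_ge0.
  move: c1; congr (0 <= _); ring.
rewrite ler_pM2l // in c2.
have c3 : s * b ^+ 2 - 2 * a * b * g + a ^+ 2 * t <= e ^+ 2 * (s * t).
  apply: (le_trans c2); apply: le_trans H.
  by rewrite -[leRHS]mul1r ler_wpM2r.
have st : 0 < s * t by rewrite mulr_gt0.
have -> : (b / t) ^+ 2 * t - 2 * (b / t) * (a / s) * g + (a / s) ^+ 2 * s
   = (s * b ^+ 2 - 2 * a * b * g + a ^+ 2 * t) / (s * t).
  by field; rewrite ?lt0r_neq0.
by rewrite ler_pdivrMr.
Qed.

Lemma gen_gap n m (eps : R) : dot n n != 0 -> dot m m != 0 -> 0 <= eps ->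
  dot n n * dot m m - dot n m ^+ 2 <= eps ^+ 2 * (dot n n * dot m m) ->
  specnorm (orth_proj (hyp n) - orth_proj (hyp m)) <= eps.
Proof.
move=> nn mm e0 H.
rewrite !orth_projE // /specnorm.
have sp : 0 < dot n n by rewrite lt_def nn dot_ge0.
have tp : 0 < dot m m by rewrite lt_def mm dot_ge0.
apply: ge_sup.
  exists (norm2 ((0 : 'rV[R]_N) *m (proj n - proj m))); exists 0; split => //.
  by rewrite norm2_dot /dot big1 ?sqrtr0 ?ler01 // => i _; rewrite !mxE mulr0.
move=> r [x [hx ->]].
have X1 : dot x x <= 1.
  by move: hx; rewrite norm2_dot => hx; rewrite -(ler_sqrt _ ler01) sqrtr1.
set s := dot n n; set t := dot m m; set g := dot n m.
set a := dot x n; set b := dot x m.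
have ey : x *m (proj n - proj m) = (b / t) *: m - (a / s) *: n.
  rewrite mulmxBr !projE; apply/matrixP => i j; rewrite !mxE; rewrite /a /b /s /t; ring.
have G0 : 0 <= s * t - g ^+ 2 by rewrite subr_ge0; exact: CS.
have CSw := CS (s *: x - a *: n) (s *: m - g *: n).
rewrite !(dotBl, dotBr, dotZl, dotZr) in CSw.
rewrite (dotC n x) (dotC m n) in CSw.
have dy : dot (x *m (proj n - proj m)) (x *m (proj n - proj m)) =
   (b / t) ^+ 2 * t - 2 * (b / t) * (a / s) * g + (a / s) ^+ 2 * s.
  rewrite ey !(dotBl, dotBr, dotZl, dotZr) -/s -/t -/g (dotC m n) -/g; ring.
rewrite norm2_dot dy -(ger0_norm e0) -sqrtr_sqr ler_sqrt ?sqr_ge0 //.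
apply: (scal (X := dot x x) sp tp _ e0 G0) => //.
  by rewrite dot_ge0 X1.
move: CSw; rewrite /a /b /s /t /g; congr (_ <= _); ring.
Qed.
End G.

Section S.
Variable R : realType.

Lemma vatE K (v : 'rV[R]_K) (i : 'I_K) : vat v i = v 0 i.
Proof.
rewrite /vat; case: insubP => [j _ hj|]; last by rewrite ltn_ord.
by congr (v 0 _); apply: val_inj.
Qed.

Lemma dot_nat K (x y : 'rV[R]_K) : dot x y = \sum_(0 <= i < K) vat x i * vat y i.
Proof. by rewrite big_mkord; apply: eq_bigr => i _; rewrite !vatE. Qed.

Definition nvec K N2 (F : 'rV[R]_K) : 'rV[R]_N2 :=
  \row_(i < N2) (if (i < K)%N then vat F i else -1).

Lemma vat_nvec K N2 (F : 'rV[R]_K) j : (j < N2)%N ->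
  vat (nvec N2 F) j = if (j < K)%N then vat F j else -1.
Proof.
move=> hj; rewrite /vat; case: insubP => [i _ hi|]; last by rewrite hj.
by rewrite mxE hi.
Qed.

Lemma dot_nvec K N2 (F G : 'rV[R]_K) : N2 = K.+1 ->
  dot (nvec N2 F) (nvec N2 G) = dot F G + 1.
Proof.
move=> e; rewrite !dot_nat e big_nat_recr //= !vat_nvec // ltnn mulrNN mulr1.
congr (_ + _); rewrite big_nat_cond [RHS]big_nat_cond; apply: eq_bigr => i.
rewrite andbT => /andP[_ hi]; rewrite !vat_nvec ?hi //; exact: ltnW.
Qed.

Lemma vatF L (a b : nat -> R) j : (j < 2 * L - 1)%N ->
  vat (Fvec L a b) j =
    if (j < 2 * L - 2)%N then (if odd j then b j./2 else a j./2) else b L.-1.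
Proof.
move=> hj; rewrite /vat; case: insubP => [i _ hi|]; last by rewrite hj.
by rewrite mxE hi.
Qed.

Lemma sum_pairs K (f : nat -> R) :
  \sum_(0 <= i < 2 * K) f i = \sum_(k < K) (f (2 * k)%N + f (2 * k).+1).
Proof.
elim: K => [|K IH]; first by rewrite muln0 big_geq // big_ord0.
have -> : (2 * K.+1 = (2 * K).+2)%N by lia.
by rewrite big_ord_recr !big_nat_recr //= -IH addrA.
Qed.

Lemma sum_last (f : nat -> R) n m : n = m.+1 ->
  \sum_(0 <= i < n) f i = \sum_(0 <= i < m) f i + f m.
Proof. by move=> ->; rewrite big_nat_recr. Qed.

Lemma sumF L (a b g : nat -> R) : (2 <= L)%N ->
  \sum_(0 <= i < 2 * L - 1) g i * vat (Fvec L a b) i =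
  \sum_(k < L.-1) a k * g (2 * k)%N + \sum_(k < L) b k * g (uidx L k).
Proof.
move=> hL.
rewrite big_nat_cond (eq_bigr (fun i => g i *
   if (i < 2 * L - 2)%N then (if odd i then b i./2 else a i./2) else b L.-1)); last first.
  by move=> i; rewrite andbT => /andP[_ hi]; rewrite vatF.
rewrite -big_nat_cond.
have [K eK] : exists K, L = K.+1 by exists L.-1; lia.
subst L.
rewrite (@sum_last _ _ (2 * K)); last by lia.
have -> : (2 * K < 2 * K.+1 - 2)%N = false by lia.
rewrite /= big_ord_recr /=.
rewrite big_nat_cond (eq_bigr (fun i => g i *
   (if odd i then b i./2 else a i./2))); last first.
  by move=> i; rewrite andbT => /andP[_ hi]; have -> : (i < 2 * K.+1 - 2)%N by lia.
rewrite -big_nat_cond sum_pairs.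
have -> : uidx K.+1 K = (2 * K)%N by rewrite /uidx /= ltnn; lia.
rewrite [RHS]addrA [g (2 * K)%N * b K]mulrC; congr (_ + _); rewrite -big_split /=; apply: eq_bigr => k _.
have -> : uidx K.+1 k = (2 * k).+1 by rewrite /uidx /= ltn_ord.
have -> : odd (2 * k) = false by rewrite oddM.
have -> : ((2 * k)%N./2 = k) by lia.
have -> : uphalf (2 * k) = k by lia.
by rewrite /= !(mulrC (g _)).
Qed.

Lemma arx_hyp L (a b : nat -> R) : (2 <= L)%N ->
  arx_set L a b = hyp (nvec (2 * L) (Fvec L a b)).
Proof.
move=> hL; apply/funext => v; apply/propext; rewrite /arx_set /hyp /=.
have key : dot v (nvec (2 * L) (Fvec L a b)) =
   (\sum_(k < L.-1) a k * vat v (2 * k) + \sum_(k < L) b k * vat v (uidx L k))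
   - vat v (2 * L - 1).
  rewrite dot_nat (@sum_last _ _ (2 * L - 1)); last by lia.
  rewrite vat_nvec; last by lia.
  rewrite ltnn mulrN1 -(sumF _ _ _ hL) big_nat_cond [in RHS]big_nat_cond.
  congr (_ - _); apply: eq_bigr => i; rewrite andbT => /andP[_ hi].
  by rewrite vat_nvec ?hi //; lia.
rewrite key; split => [->|/eqP]; first by rewrite subrr.
by rewrite subr_eq0 => /eqP ->.
Qed.
End S.

Theorem corollary2 (R : realType) (L : nat) (a b at_ bt : nat -> R)
    (B Bt : set (traj R)) (eps : R) :
  (2 <= L)%N ->
  in_L2 B -> in_L2 Bt -> lag_lt Bt L ->
  restr L B = arx_set L a b ->
  restr L Bt = arx_set L at_ bt ->
  norm2 (Fvec L a b - Fvec L at_ bt) <= eps ->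
  gapL L B Bt <= eps.
Proof.
move=> hL _ _ _ hB hBt hF.
rewrite /gapL /gap hB hBt !arx_hyp //.
set F := Fvec L a b; set G := Fvec L at_ bt.
have eN : (2 * L = (2 * L - 1).+1)%N by lia.
have e0 : 0 <= eps by apply: le_trans hF; rewrite norm2_dot sqrtr_ge0.
have pF := dot_ge0 F; have pG := dot_ge0 G.
apply: gen_gap => //; rewrite ?dot_nvec //.
- by rewrite lt0r_neq0 // ltr_pwDr.
- by rewrite lt0r_neq0 // ltr_pwDr.
have hd : dot (F - G) (F - G) <= eps ^+ 2.
  move: hF; rewrite norm2_dot => hs.
  have := sqr_sqrtr (dot_ge0 (F - G)).
  have := sqrtr_ge0 (dot (F - G) (F - G)).
  move: hs; set u := Num.sqrt _ => hs hu <-.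
  by rewrite ler_pXn2r // nnegrE.
have ed : dot (F - G) (F - G) = dot F F + dot G G - 2 * dot F G.
  rewrite !(dotBl, dotBr) (dotC G F); ring.
move: hd; rewrite ed; set p := dot F F; set q := dot G G; set r := dot F G => hd.
have d0 : 0 <= p + q - 2 * r by rewrite -ed dot_ge0.
have h1 : (p + 1) * (q + 1) - (r + 1) ^+ 2 <= (p + q - 2 * r) * (1 + p).
  rewrite -subr_ge0.
  have -> : (p + q - 2 * r) * (1 + p) - ((p + 1) * (q + 1) - (r + 1) ^+ 2) = (p - r) ^+ 2 by ring.
  exact: sqr_ge0.
apply: (le_trans h1).
have h2 : (p + q - 2 * r) * (1 + p) <= (p + q - 2 * r) * ((p + 1) * (q + 1)).
  apply: ler_wpM2l => //; rewrite addrC -subr_ge0.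
  have -> : (p + 1) * (q + 1) - (p + 1) = (p + 1) * q by ring.
  by apply: mulr_ge0 => //; rewrite addr_ge0.
apply: (le_trans h2); apply: ler_wpM2r => //.
by apply: mulr_ge0; rewrite addr_ge0.
Qed.
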